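(* Let $X$ be a finite set with $n$ elements. For all functions $f,g:X\to X$, \[\deg(f\circ g)\leq\sqrt{n}\,\sqrt{\deg(f)}\,\deg(g).\] Furthermore, equality holds if and only if $f$ is a constant function and $g$ is a bijection.
   Context: For finite sets $X,Y$ and a function $f:X\to Y$, the degree of $f$ is $\deg(f)=\frac{1}{|X|}\sum_{y\in Y}|f^{-1}(y)|^2$. *)

(* Defs.v *)
From HB Require Import structures.
From mathcomp Require Import all_boot all_order all_algebra.
Set Implicit Arguments. Unset Strict Implicit. Unset Printing Implicit Defensive.
Import Order.TTheory GRing.Theory Num.Theory.
Local Open Scope ring_scope.

Definition deg (R : rcfType) (X Y : finType) (f : X -> Y) : R :=
  (#|X|%:R)^-1 * \sum_(y : Y) (#|[set x | f x == y]|%:R) ^+ 2.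

Definition constant_fun (X Y : Type) (f : X -> Y) : Prop :=
  exists c : Y, forall x : X, f x = c.

(* Main.v *)
Require Import Defs.
From HB Require Import structures.
From mathcomp Require Import all_boot all_order all_algebra.
From mathcomp Require Import zify.
Import Order.TTheory GRing.Theory Num.Theory.
Set Implicit Arguments. Unset Strict Implicit. Unset Printing Implicit Defensive.

Definition cnt (X Y : finType) (h : X -> Y) (y : Y) : nat := #|[set x | h x == y]|.
Definition SS (X Y : finType) (h : X -> Y) : nat := \sum_(y : Y) cnt h y ^ 2.

Lemma cnt_sum1 (X Y : finType) (h : X -> Y) y : cnt h y = \sum_(x | h x == y) 1.
Proof. by rewrite /cnt sum1_card cardsE. Qed.

Lemma cnt_comp (X : finType) (f g : X -> X) z :
  cnt (f \o g) z = \sum_(y | f y == z) cnt g y.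
Proof.
rewrite cnt_sum1 (partition_big g (fun y => f y == z)) /=; last by [].
apply: eq_bigr => y /eqP fy; rewrite cnt_sum1; apply: eq_bigl => x.
by case: (g x =P y) => [->|]; rewrite ?andbF ?fy ?eqxx.
Qed.

Lemma sum_part (X : finType) (f : X -> X) (F : X -> nat) :
  \sum_y F y = \sum_z \sum_(y | f y == z) F y.
Proof. by rewrite (partition_big f predT). Qed.

Lemma sum_cnt (X : finType) (h : X -> X) : \sum_y cnt h y = #|X|.
Proof.
under eq_bigr do rewrite cnt_sum1.
by rewrite -sum_part sum1_card.
Qed.

Lemma CS (I : finType) (P : pred I) (a : I -> nat) :
  (\sum_(i | P i) a i) ^ 2 <= (\sum_(i | P i) 1) * \sum_(i | P i) a i ^ 2.
Proof.
have -> : (\sum_(i | P i) a i) ^ 2 = \sum_(i | P i) \sum_(j | P j) a i * a j.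
  by rewrite -mulnn big_distrl; apply: eq_bigr => i _; rewrite big_distrr.
have E1 : (\sum_(i | P i) 1) * \sum_(i | P i) a i ^ 2 = \sum_(i | P i) \sum_(j | P j) a j ^ 2.
  rewrite big_distrl /=; apply: eq_bigr => i _; exact: mul1n.
have E2 : (\sum_(i | P i) 1) * \sum_(i | P i) a i ^ 2 = \sum_(i | P i) \sum_(j | P j) a i ^ 2.
  rewrite mulnC big_distrl /=; apply: eq_bigr => i _.
  rewrite big_distrr /=; apply: eq_bigr => j _; exact: muln1.
set L := \sum_(i | P i) _.
set R := _ * _.
suff H : 2 * L <= R + R by lia.
rewrite {1}/R E2 /R E1 -big_split /L big_distrr /=.
apply: leq_sum => i _; rewrite -big_split big_distrr /=.
apply: leq_sum => j _; exact: (nat_Cauchy (a i) (a j)).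
Qed.

Lemma main_nat (X : finType) (f g : X -> X) :
  SS (f \o g) <= (\max_z cnt f z) * SS g.
Proof.
rewrite /SS [X in _ <= _ * X](sum_part f) big_distrr /=.
apply: leq_sum => z _; rewrite cnt_comp.
apply: (leq_trans (CS (fun y => f y == z) (cnt g))); rewrite -cnt_sum1.
by rewrite leq_mul2r leq_bigmax orbT.
Qed.

Lemma max_sq (X : finType) (f : X -> X) (z0 : X) :
  \max_z cnt f z = cnt f z0 -> (\max_z cnt f z) ^ 2 <= SS f.
Proof.
move=> ->; rewrite /SS (bigD1 z0) //=; exact: leq_addr.
Qed.

Lemma SS_ge (X : finType) (g : X -> X) : #|X| <= SS g.
Proof.
rewrite -(sum_cnt g) /SS; apply: leq_sum => y _.
set a := cnt g y; rewrite -mulnn; nia.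
Qed.

Lemma SS_const (X : finType) (h : X -> X) c : (forall x, h x = c) -> SS h = #|X| ^ 2.
Proof.
move=> hc; rewrite /SS (bigD1 c) //= big1 ?addn0.
  rewrite cnt_sum1 -sum1_card; congr (_ ^ 2); apply: eq_bigl => x.
  by rewrite hc eqxx.
move=> z zc; rewrite cnt_sum1 big_pred0 // => x; rewrite hc eq_sym.
by apply/negbTE.
Qed.

Lemma SS_bij (X : finType) (g : X -> X) : bijective g -> SS g = #|X|.
Proof.
case=> g' c1 c2; rewrite -(sum_cnt g) /SS; apply: eq_bigr => y _.
have -> : cnt g y = 1.
  rewrite /cnt (_ : [set x | g x == y] = [set g' y]) ?cards1 //.
  apply/setP => x; rewrite !inE; apply/eqP/eqP => [<-|->]; by rewrite ?c1 ?c2.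
by [].
Qed.

Lemma SS_inj (X : finType) (g : X -> X) : SS g = #|X| -> injective g.
Proof.
move=> h.
have le1 : forall y, cnt g y <= 1.
  have H : \sum_y (cnt g y ^ 2 - cnt g y) = 0.
    rewrite sumnB; last by move=> y _; rewrite -mulnn; nia.
    by rewrite -/(SS g) h sum_cnt subnn.
  move/eqP: H; rewrite sum_nat_eq0 => /forallP H y.
  move: (H y); rewrite /= subn_eq0 -mulnn; nia.
move=> x1 x2 e.
have := le1 (g x1) => /card_le1_eqP H.
by apply: H; rewrite inE ?e eqxx.
Qed.

Local Open Scope ring_scope.

Theorem mainTheorem2 (R : rcfType) (X : finType) (n : nat)
  (hn : #|X| = n) (hpos : (0 < n)%N) (f g : X -> X) :
  deg R (f \o g) <= Num.sqrt (n%:R) * Num.sqrt (deg R f) * deg R g /\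
  (deg R (f \o g) = Num.sqrt (n%:R) * Num.sqrt (deg R f) * deg R g <->
     constant_fun f /\ bijective g).
Proof.
have degE (h : X -> X) : deg R h = (n%:R)^-1 * (SS h)%:R.
  by rewrite /deg hn /SS natr_sum; congr (_ * _); apply: eq_bigr => y _; rewrite natrX.
have Nn : (0 : R) < n%:R by rewrite ltr0n.
have key : Num.sqrt (n%:R) * Num.sqrt (deg R f) * deg R g
    = (n%:R)^-1 * (Num.sqrt (SS f)%:R * (SS g)%:R).
  rewrite !degE -sqrtrM ?ler0n // (mulrA n%:R) mulfV ?gt_eqF // mul1r.
  by rewrite mulrCA mulrA.
rewrite key degE.
have cX : (0 < #|X|)%N by rewrite hn.
have [z0 hz0] := bigop.eq_bigmax (cnt f) cX.
have h1 := main_nat f g.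
have h2 := max_sq hz0.
move: h1 h2 hz0.
set M := (\max_z cnt f z)%N => h1 h2 hz0.
have hM : (M%:R : R) <= Num.sqrt (SS f)%:R.
  by rewrite -[M%:R]ger0_norm ?ler0n // -sqrtr_sqr ler_sqrt ?ler0n // -natrX ler_nat.
have hc : (0 < SS g)%N by apply: leq_trans (SS_ge g); rewrite hn.
have ineq : ((SS (f \o g))%:R : R) <= Num.sqrt (SS f)%:R * (SS g)%:R.
  apply: (@le_trans _ _ ((M * SS g)%N%:R)); first by rewrite ler_nat.
  by rewrite natrM ler_wpM2r ?ler0n.
split; first by rewrite ler_pM2l ?invr_gt0.
split.
- move/(mulfI (invr_neq0 (lt0r_neq0 Nn))) => eq.
  have eM : (M%:R : R) = Num.sqrt (SS f)%:R.
    apply/eqP; rewrite eq_le hM /=.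
    rewrite -(ler_pM2r (_ : 0 < (SS g)%:R)) ?ltr0n // -eq -natrM ler_nat //.
  have eMb : (M ^ 2)%N = SS f.
    by apply/eqP; rewrite -(eqr_nat R) natrX eM sqr_sqrtr ?ler0n.
  have fc : forall x, f x = z0.
    move: eMb; rewrite hz0 /SS (bigD1 z0) //= => /eqP.
    rewrite -{1}[(_ ^ 2)%N]addn0 eqn_add2l eq_sym sum_nat_eq0 => /forallP H x.
    apply/eqP; apply: contraT => ne.
    move: (H (f x)); rewrite ne /= expn_eq0 andbT /cnt cards_eq0 => /eqP e0.
    have : x \in [set x' | f x' == f x] by rewrite inE.
    by rewrite e0 inE.
  split; first by exists z0.
  apply: injF_bij; apply: SS_inj.
  move: eq.
  rewrite (@SS_const X (f \o g) z0 (fun x => fc (g x))) (@SS_const X f z0 fc).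
  rewrite hn natrX sqrtr_sqr ger0_norm ?ler0n // -natrM => /eqP.
  rewrite -natrX eqr_nat -mulnn eqn_mul2l => /orP [/eqP n0|/eqP ->//].
  by rewrite n0 in hpos.
- case=> [[c0 fc] gb].
  rewrite (@SS_const X (f \o g) c0 (fun x => fc (g x))) (@SS_const X f c0 fc).
  by rewrite (SS_bij gb) hn !natrX sqrtr_sqr ger0_norm ?ler0n // expr2.
Qed.
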